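(* Let $0<c<\Gamma_0$ and $t>0$, and let $\mathcal D=\{(\tau,p):0<\tau<t,\ c<p<\Gamma_0\}$. Let $A$ be the cooperation area and regions II, III, VII as defined in the context. Then: - the maximum of $A$ over the closure (in $\mathcal D$) of region II is attained at $(\tau,p)=\left(\tfrac12 t,\ \sqrt{c\Gamma_0}\right)$; - the maximum over the closure of region III is attained at $\left(\frac{\Gamma_0}{\Gamma_0+c}t,\ \frac{2\Gamma_0 c}{\Gamma_0+c}\right)$; - the maximum over the closure of region VII is attained at $\left(\frac{\Gamma_0-\sqrt{c\Gamma_0}}{\Gamma_0-c}t,\ \sqrt{c\Gamma_0}\right)$.
   Context: The client utility is linear: $\Gamma(d)=\Gamma_0(1-d)$. For $(\tau,p)\in\mathcal D$ write $s=\tau/t$ and, for $w\in(0,1]$, set $K(w)=1-(1-w)s$. Define $$d_s(w;\tau,p)=1-\frac{cK(w)}{wp},\qquad d_c(w;\tau,p)=1-\frac{p}{\Gamma_0K(w)}.$$ The cooperation area is $$A(\tau,p)=\int_0^1\max\{\min(d_s(w;\tau,p),d_c(w;\tau,p)),0\}\,dw.$$ The regions (subsets of $\mathcal D$) are: - region II: $p^2\ge 4c\Gamma_0 s(1-s)$, $p<\Gamma_0(1-s)+cs$, $p<\sqrt{c\Gamma_0}$, and $s<\tfrac12$; - region III: $p^2\ge 4c\Gamma_0 s(1-s)$, $p<\Gamma_0(1-s)+cs$, $p<\sqrt{c\Gamma_0}$, and $s>\frac{\Gamma_0}{\Gamma_0+c}$; - region VII: $p^2\ge4c\Gamma_0 s(1-s)$,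 $p>\Gamma_0(1-s)+cs$, and $p>\sqrt{c\Gamma_0}$. *)

(* Defs.v *)
From Stdlib Require Import Reals Lra.
From Coquelicot Require Import Coquelicot.
Open Scope R_scope.

Definition sK (t tau : R) : R := tau / t.

Definition Kw (t tau w : R) : R := 1 - (1 - w) * sK t tau.

Definition d_s (c t tau p w : R) : R := 1 - c * Kw t tau w / (w * p).

Definition d_c (G0 t tau p w : R) : R := 1 - p / (G0 * Kw t tau w).

Definition coopArea (c G0 t tau p : R) : R :=
  RInt (fun w => Rmax (Rmin (d_s c t tau p w) (d_c G0 t tau p w)) 0) 0 1.

Definition inD (c G0 t : R) (q : R * R) : Prop :=
  0 < fst q < t /\ c < snd q < G0.

Definition regionII (c G0 t : R) (q : R * R) : Prop :=
  let s := sK t (fst q) in let p := snd q in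
  inD c G0 t q /\
  p ^ 2 >= 4 * c * G0 * s * (1 - s) /\ p < G0 * (1 - s) + c * s /\
  p < sqrt (c * G0) /\ s < 1 / 2.

Definition regionIII (c G0 t : R) (q : R * R) : Prop :=
  let s := sK t (fst q) in let p := snd q in
  inD c G0 t q /\
  p ^ 2 >= 4 * c * G0 * s * (1 - s) /\ p < G0 * (1 - s) + c * s /\
  p < sqrt (c * G0) /\ s > G0 / (G0 + c).

Definition regionVII (c G0 t : R) (q : R * R) : Prop :=
  let s := sK t (fst q) in let p := snd q in
  inD c G0 t q /\
  p ^ 2 >= 4 * c * G0 * s * (1 - s) /\ p > G0 * (1 - s) + c * s /\
  p > sqrt (c * G0).

Definition closure2 (S : R * R -> Prop) (q : R * R) : Prop :=
  forall eps : R, 0 < eps ->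
    exists x, S x /\ Rabs (fst x - fst q) < eps /\ Rabs (snd x - snd q) < eps.

Definition closureInD (c G0 t : R) (S : R * R -> Prop) (q : R * R) : Prop :=
  closure2 S q /\ inD c G0 t q.

Definition maxAttainedAt (c G0 t : R) (S : R * R -> Prop) (q : R * R) : Prop :=
  S q /\ forall x, S x -> coopArea c G0 t (fst x) (snd x) <= coopArea c G0 t (fst q) (snd q).

(* Main.v *)
Require Import Defs.
From Stdlib Require Import Reals Lra Psatz.
From Coquelicot Require Import Coquelicot.
Open Scope R_scope.

Definition Ig (c G0 t tau p : R) (w : R) : R :=
  Rmax (Rmin (d_s c t tau p w) (d_c G0 t tau p w)) 0.

Lemma cont_maxmin (A B : R -> R) z :
  continuous A z -> continuous B z ->
  continuous (fun w => Rmax (Rmin (A w) (B w)) 0) z.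
Proof.
  intros HA HB.
  assert (E : forall w, Rmax (Rmin (A w) (B w)) 0 =
     ((A w + B w - Rabs (A w - B w)) / 2 + Rabs ((A w + B w - Rabs (A w - B w)) / 2)) / 2).
  { intro w. unfold Rmax, Rmin.
    destruct (Rle_dec (A w) (B w)); [rewrite (Rabs_left1 (A w - B w)) by lra|rewrite (Rabs_right (A w - B w)) by lra];
    (destruct (Rle_dec _ 0); [rewrite Rabs_left1 by lra|rewrite Rabs_right by lra]; lra). }
  apply (continuous_ext (fun w => ((A w + B w - Rabs (A w - B w)) / 2 + Rabs ((A w + B w - Rabs (A w - B w)) / 2)) / 2)).
  { intro; symmetry; apply E. }
  apply continuity_pt_filterlim.
  apply continuity_pt_filterlim in HA. apply continuity_pt_filterlim in HB.
  assert (H1 : continuity_pt (fun w => (A w + B w - Rabs (A w - B w)) / 2) z).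
  { unfold Rdiv. apply continuity_pt_mult; [|apply continuity_pt_const; intros ??; reflexivity].
    apply continuity_pt_minus; [apply continuity_pt_plus; auto|].
    apply (continuity_pt_comp (fun w => A w - B w) Rabs); [apply continuity_pt_minus; auto|apply Rcontinuity_abs]. }
  unfold Rdiv at 1. apply continuity_pt_mult; [|apply continuity_pt_const; intros ??; reflexivity].
  apply continuity_pt_plus; auto.
  apply (continuity_pt_comp _ Rabs); [exact H1|apply Rcontinuity_abs].
Qed.

Lemma cont_Ig c G0 t tau p z : 0 < c -> 0 < G0 -> 0 < tau < t -> 0 < p -> 0 < z ->
  continuous (Ig c G0 t tau p) z.
Proof.
  intros hc hG htau hp hz. unfold Ig.
  assert (Hs : 0 < tau / t < 1).
  { split. apply Rdiv_lt_0_compat; lra. apply (Rmult_lt_reg_r t); [lra|]. field_simplify; lra. }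
  assert (HK : 0 < 1 - (1 - z) * (tau / t)) by nra.
  apply (cont_maxmin (fun w => d_s c t tau p w) (fun w => d_c G0 t tau p w)); apply (@ex_derive_continuous R_AbsRing R_NormedModule); unfold d_s, d_c, Kw, sK; auto_derive.
  all: repeat split; try apply Rmult_integral_contrapositive; try split; lra.
Qed.

Lemma Ig_zero c G0 t tau p w : 0 < c -> 0 < tau < t -> 0 < p -> 0 < w ->
  c * Kw t tau w >= w * p -> Ig c G0 t tau p w = 0.
Proof.
  intros hc htau hp hw H. unfold Ig, d_s.
  assert (1 <= c * Kw t tau w / (w * p)).
  { apply (Rmult_le_reg_r (w*p)); [nra|]. unfold Rdiv. rewrite Rmult_assoc, Rinv_l by nra. lra. }
  unfold Rmax, Rmin. repeat destruct Rle_dec; lra.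
Qed.

Lemma ex_Ig c G0 t tau p : 0 < c -> 0 < G0 -> 0 < tau < t -> 0 < p ->
  ex_RInt (Ig c G0 t tau p) 0 1.
Proof.
  intros hc hG htau hp.
  assert (Hs : 0 < tau / t < 1).
  { split. apply Rdiv_lt_0_compat; lra. apply (Rmult_lt_reg_r t); [lra|]. field_simplify; lra. }
  set (e := Rmin (1/2) (c * (1 - tau/t) / p)).
  assert (He1 : 0 < c * (1 - tau / t) / p) by (apply Rdiv_lt_0_compat; nra).
  assert (He : 0 < e <= 1/2) by (unfold e, Rmin; destruct Rle_dec; lra).
  assert (He2 : e <= c * (1 - tau / t) / p) by (unfold e; apply Rmin_r).
  apply (ex_RInt_Chasles _ 0 e 1).
  - apply (ex_RInt_ext (fun _ => 0)); [|apply ex_RInt_const].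
    intros x Hx. rewrite Rmin_left in Hx by lra. rewrite Rmax_right in Hx by lra.
    symmetry. apply Ig_zero; try lra.
    unfold Kw, sK.
    assert (x * p <= c * (1 - tau/t)).
    { apply (Rmult_le_reg_r (/p)). apply Rinv_0_lt_compat; lra.
      rewrite Rmult_assoc, Rinv_r by lra. unfold Rdiv in He2. lra. }
    assert (0 <= c * x * (tau/t)) by (apply Rmult_le_pos; [apply Rmult_le_pos|]; lra). lra.
  - apply (@ex_RInt_continuous R_CompleteNormedModule). intros z Hz. rewrite Rmin_left in Hz by lra.
    apply cont_Ig; lra.
Qed.


Lemma frac_le a b x d : 0 < b -> 0 < d -> a * d <= x * b -> a / b <= x / d.
Proof.
  intros hb hd H. apply (Rmult_le_reg_r (b*d)); [nra|].
  replace (a / b * (b * d)) with (a * d) by (field; lra).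
  replace (x / d * (b * d)) with (x * b) by (field; lra). exact H.
Qed.

Lemma mm_le1 a1 b1 a2 b2 : a1 <= a2 -> a2 <= b2 -> Rmax (Rmin a1 b1) 0 <= Rmax (Rmin a2 b2) 0.
Proof. intros; unfold Rmax, Rmin; repeat destruct Rle_dec; lra. Qed.
Lemma mm_le2 a1 b1 a2 b2 : b1 <= b2 -> b2 <= a2 -> Rmax (Rmin a1 b1) 0 <= Rmax (Rmin a2 b2) 0.
Proof. intros; unfold Rmax, Rmin; repeat destruct Rle_dec; lra. Qed.
Lemma mm_le0 a1 b1 a2 b2 : a1 <= 0 \/ b1 <= 0 -> Rmax (Rmin a1 b1) 0 <= Rmax (Rmin a2 b2) 0.
Proof. intros; unfold Rmax, Rmin; repeat destruct Rle_dec; lra. Qed.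

Lemma ds_le c t tau1 p1 tau2 p2 w : 0 < c -> 0 < w -> 0 < p1 -> 0 < p2 ->
  Kw t tau2 w * p1 <= Kw t tau1 w * p2 -> d_s c t tau1 p1 w <= d_s c t tau2 p2 w.
Proof.
  intros. unfold d_s. assert (c * Kw t tau2 w / (w * p2) <= c * Kw t tau1 w / (w * p1)).
  { apply frac_le; try nra.
    replace (c * Kw t tau2 w * (w * p1)) with ((c*w) * (Kw t tau2 w * p1)) by ring.
    replace (c * Kw t tau1 w * (w * p2)) with ((c*w) * (Kw t tau1 w * p2)) by ring.
    apply Rmult_le_compat_l; nra. }
  lra.
Qed.

Lemma dc_le G0 t tau1 p1 tau2 p2 w : 0 < G0 -> 0 < Kw t tau1 w -> 0 < Kw t tau2 w ->
  p2 * Kw t tau1 w <= p1 * Kw t tau2 w -> d_c G0 t tau1 p1 w <= d_c G0 t tau2 p2 w.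
Proof.
  intros. unfold d_c. assert (p2 / (G0 * Kw t tau2 w) <= p1 / (G0 * Kw t tau1 w)).
  { apply frac_le; try nra. }
  lra.
Qed.

Lemma ds_le_dc c G0 t tau p w : 0 < c -> 0 < G0 -> 0 < w -> 0 < p -> 0 < Kw t tau w ->
  w * p ^ 2 <= c * G0 * Kw t tau w ^ 2 -> d_s c t tau p w <= d_c G0 t tau p w.
Proof.
  intros. unfold d_s, d_c. assert (p / (G0 * Kw t tau w) <= c * Kw t tau w / (w * p)).
  { apply frac_le; try nra. }
  lra.
Qed.

Lemma dc_le_ds c G0 t tau p w : 0 < c -> 0 < G0 -> 0 < w -> 0 < p -> 0 < Kw t tau w ->
  c * G0 * Kw t tau w ^ 2 <= w * p ^ 2 -> d_c G0 t tau p w <= d_s c t tau p w.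
Proof.
  intros. unfold d_s, d_c. assert (c * Kw t tau w / (w * p) <= p / (G0 * Kw t tau w)).
  { apply frac_le; try nra. }
  lra.
Qed.

Lemma ds_nonpos c t tau p w : 0 < w -> 0 < p -> w * p <= c * Kw t tau w -> d_s c t tau p w <= 0.
Proof.
  intros. unfold d_s. assert (1 <= c * Kw t tau w / (w * p)).
  { apply (Rmult_le_reg_r (w*p)); [nra|]. unfold Rdiv. rewrite Rmult_assoc, Rinv_l by nra. lra. }
  lra.
Qed.

Lemma dc_nonpos G0 t tau p w : 0 < G0 -> 0 < Kw t tau w -> G0 * Kw t tau w <= p -> d_c G0 t tau p w <= 0.
Proof.
  intros. unfold d_c. assert (1 <= p / (G0 * Kw t tau w)).
  { apply (Rmult_le_reg_r (G0 * Kw t tau w)); [nra|]. unfold Rdiv. rewrite Rmult_assoc, Rinv_l by nra. lra. }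
  lra.
Qed.


Lemma pw_II c G0 t tau p w m : 0 < c -> 0 < G0 -> 0 < t -> 0 < tau / t <= 1/2 -> 0 < p <= m ->
  m * m = c * G0 -> 0 < w < 1 ->
  Ig c G0 t tau p w <= Ig c G0 t (t/2) m w.
Proof.
  intros hc hG ht hs hp hm hw. unfold Ig.
  assert (EK : Kw t (t/2) w = (1 + w) / 2) by (unfold Kw, sK; field; lra).
  assert (EK1 : Kw t tau w = 1 - (1 - w) * (tau / t)) by (unfold Kw, sK; reflexivity).
  apply mm_le1.
  - apply ds_le; try lra. rewrite EK, EK1.
    assert ((1 - w) * (tau / t) <= (1 - w) * (1/2)) by (apply Rmult_le_compat_l; lra).
    apply Rmult_le_compat; lra.
  - apply ds_le_dc. all: try lra.
    rewrite EK. replace (m ^ 2) with (c * G0) by (rewrite <- hm; ring).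
    assert (0 <= c * G0 * (1 - w) ^ 2) by (apply Rmult_le_pos; nra).
    nra.
Qed.

Lemma pw_III c G0 t tau p w : 0 < c < G0 -> 0 < t -> G0 / (G0 + c) <= tau / t < 1 ->
  0 < p <= G0 * (1 - tau / t) + c * (tau / t) -> 0 < w < 1 ->
  Ig c G0 t tau p w <= Ig c G0 t (G0 / (G0 + c) * t) (2 * G0 * c / (G0 + c)) w.
Proof.
  intros hc ht hs hp hw. unfold Ig.
  set (s := tau / t) in *.
  assert (EK : Kw t (G0 / (G0 + c) * t) w = (c + G0 * w) / (G0 + c)) by (unfold Kw, sK; field; lra).
  assert (EK1 : Kw t tau w = 1 - (1 - w) * s) by (unfold Kw, sK; reflexivity).
  assert (Hss : G0 <= (G0 + c) * s).
  { destruct hs as [hs1 _]. apply (Rmult_le_compat_l (G0 + c)) in hs1; [|lra]. replace ((G0 + c) * (G0 / (G0 + c))) with G0 in hs1 by (field; lra). lra. }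
  assert (HK : 0 < 1 - (1 - w) * s) by nra.
  destruct (Rle_lt_dec (c / G0) w) as [Hw | Hw].
  - assert (Hw' : c <= G0 * w).
    { apply (Rmult_le_compat_l G0) in Hw; [|lra]. replace (G0 * (c / G0)) with c in Hw by (field; lra). lra. }
    apply mm_le1.
    + apply ds_le; try lra. apply Rdiv_lt_0_compat; nra.
      rewrite EK, EK1.
      apply (Rmult_le_reg_r (G0 + c)); [lra|].
      replace ((c + G0 * w) / (G0 + c) * p * (G0 + c)) with ((c + G0 * w) * p) by (field; lra).
      replace ((1 - (1 - w) * s) * (2 * G0 * c / (G0 + c)) * (G0 + c)) with ((1 - (1 - w) * s) * (2 * G0 * c)) by (field; lra).
      assert (0 <= (c + G0 * w) * (G0 * (1 - s) + c * s - p)) by (apply Rmult_le_pos; nra).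
      assert (0 <= ((G0 + c) * s - G0) * (G0 * w - c)) by (apply Rmult_le_pos; nra).
      nra.
    + apply ds_le_dc; try lra. apply Rdiv_lt_0_compat; nra. rewrite EK. apply Rdiv_lt_0_compat; nra.
      rewrite EK.
      replace ((2 * G0 * c / (G0 + c)) ^ 2) with (4 * G0 * G0 * c * c / ((G0 + c) ^ 2)) by (field; lra).
      replace (((c + G0 * w) / (G0 + c)) ^ 2) with ((c + G0 * w) ^ 2 / ((G0 + c) ^ 2)) by (field; lra).
      unfold Rdiv. rewrite <- Rmult_assoc, <- (Rmult_assoc (c * G0)).
      apply Rmult_le_compat_r. apply Rlt_le, Rinv_0_lt_compat. nra.
      assert (0 <= c * G0 * (c - G0 * w) ^ 2) by (apply Rmult_le_pos; nra).
      nra.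
  - assert (Hw' : G0 * w < c).
    { apply (Rmult_lt_compat_l G0) in Hw; [|lra]. replace (G0 * (c / G0)) with c in Hw by (field; lra). lra. }
    apply mm_le0. left. apply ds_nonpos; try lra. rewrite EK1.
    assert (0 <= (1 - s) * (c - G0 * w)) by (apply Rmult_le_pos; nra).
    nra.
Qed.

Lemma pw_VII c G0 t tau p w m : 0 < c < G0 -> 0 < t -> 0 < tau / t < 1 -> m * m = c * G0 -> c < m < G0 ->
  m <= p -> G0 * (1 - tau / t) + c * (tau / t) <= p -> 0 < w < 1 ->
  Ig c G0 t tau p w <= Ig c G0 t ((G0 - m) / (G0 - c) * t) m w.
Proof.
  intros hc ht hs hm hm2 hp hpL hw. unfold Ig.
  set (s := tau / t) in *.
  assert (EK : Kw t ((G0 - m) / (G0 - c) * t) w = (G0 * w - c + (1 - w) * m) / (G0 - c)) by (unfold Kw, sK; field; lra).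
  assert (EK1 : Kw t tau w = 1 - (1 - w) * s) by (unfold Kw, sK; reflexivity).
  assert (HK : 0 < 1 - (1 - w) * s) by nra.
  destruct (Rle_lt_dec (c / G0) w) as [Hw | Hw].
  - assert (Hw' : c <= G0 * w).
    { apply (Rmult_le_compat_l G0) in Hw; [|lra]. replace (G0 * (c / G0)) with c in Hw by (field; lra). lra. }
    assert (HK7 : 0 < (G0 * w - c + (1 - w) * m) / (G0 - c)) by (apply Rdiv_lt_0_compat; nra).
    apply mm_le2.
    + apply dc_le; try lra.
      rewrite EK, EK1.
      apply (Rmult_le_reg_r (G0 - c)); [lra|].
      replace (p * ((G0 * w - c + (1 - w) * m) / (G0 - c)) * (G0 - c)) with (p * (G0 * w - c + (1 - w) * m)) by (field; lra).
      assert (0 <= m * (1 - w) * (p - (G0 * (1 - s) + c * s) )) by (apply Rmult_le_pos; [apply Rmult_le_pos|]; lra).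
      assert (0 <= (G0 * w - c) * (p - m)) by (apply Rmult_le_pos; lra).
      nra.
    + apply dc_le_ds; try lra. rewrite EK.
      apply (Rmult_le_reg_r ((G0 - c) ^ 2)); [nra|].
      replace (c * G0 * ((G0 * w - c + (1 - w) * m) / (G0 - c)) ^ 2 * (G0 - c) ^ 2) with (c * G0 * (G0 * w - c + (1 - w) * m) ^ 2) by (field; lra).
      assert (0 <= (G0 * w - c) * (1 - w)) by (apply Rmult_le_pos; lra).
      assert (0 <= (G0 - m) * (G0 - m) * (G0 * w - c) * (1 - w)) by (apply Rmult_le_pos; [|lra]; apply Rmult_le_pos; [|lra]; nra).
      assert (E : (G0 - c) ^ 2 * (w * m ^ 2) - c * G0 * (G0 * w - c + (1 - w) * m) ^ 2
                 = c * ((G0 - m) * (G0 - m) * (G0 * w - c) * (1 - w))).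
      { assert (Hc : c = m * m / G0) by (rewrite hm; field; lra).
        rewrite Hc. field. lra. }
      assert (0 <= c * ((G0 - m) * (G0 - m) * (G0 * w - c) * (1 - w))) by (apply Rmult_le_pos; lra).
      lra.
  - assert (Hw' : G0 * w < c).
    { apply (Rmult_lt_compat_l G0) in Hw; [|lra]. replace (G0 * (c / G0)) with c in Hw by (field; lra). lra. }
    apply mm_le0.
    destruct (Rle_lt_dec (G0 * (1 - (1 - w) * s)) p).
    + right. apply dc_nonpos; rewrite ?EK1; lra.
    + left. apply ds_nonpos; try lra. rewrite EK1. nra.
Qed.


Lemma closure_lin (S : R * R -> Prop) q a b g : closure2 S q ->
  (forall x, S x -> a * fst x + b * snd x < g) -> a * fst q + b * snd q <= g.
Proof.
  intros Hc H.
  destruct (Rle_lt_dec (a * fst q + b * snd q) g) as [|Hlt]; [assumption|exfalso].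
  set (d := a * fst q + b * snd q - g).
  assert (Hd : 0 < d) by (unfold d; lra).
  assert (HA : 0 < Rabs a + Rabs b + 1) by (pose proof (Rabs_pos a); pose proof (Rabs_pos b); lra).
  set (eps := d / (Rabs a + Rabs b + 1)).
  assert (He : 0 < eps) by (apply Rdiv_lt_0_compat; lra).
  assert (Hed : eps * (Rabs a + Rabs b + 1) = d) by (unfold eps; field; lra).
  destruct (Hc eps He) as [x [Sx [h1 h2]]].
  specialize (H x Sx).
  assert (E1 : Rabs (a * (fst x - fst q)) <= Rabs a * eps).
  { rewrite Rabs_mult. apply Rmult_le_compat_l; [apply Rabs_pos|lra]. }
  assert (E2 : Rabs (b * (snd x - snd q)) <= Rabs b * eps).
  { rewrite Rabs_mult. apply Rmult_le_compat_l; [apply Rabs_pos|lra]. }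
  pose proof (Rle_abs (- (a * (fst x - fst q)))). rewrite Rabs_Ropp in H0.
  pose proof (Rle_abs (- (b * (snd x - snd q)))). rewrite Rabs_Ropp in H1.
  unfold d in Hed. nra.
Qed.

Lemma pick4 a b c d : 0 < a -> 0 < b -> 0 < c -> 0 < d ->
  exists x, 0 < x /\ x <= a /\ x <= b /\ x <= c /\ x <= d.
Proof.
  intros. exists (Rmin a (Rmin b (Rmin c d))).
  repeat split; unfold Rmin; repeat destruct Rle_dec; lra.
Qed.

Lemma coopArea_Ig c G0 t tau p : coopArea c G0 t tau p = RInt (Ig c G0 t tau p) 0 1.
Proof. reflexivity. Qed.

Lemma compare c G0 t tau1 p1 tau2 p2 : 0 < c -> 0 < G0 -> 0 < tau1 < t -> 0 < p1 -> 0 < tau2 < t -> 0 < p2 ->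
  (forall w, 0 < w < 1 -> Ig c G0 t tau1 p1 w <= Ig c G0 t tau2 p2 w) ->
  coopArea c G0 t tau1 p1 <= coopArea c G0 t tau2 p2.
Proof.
  intros. rewrite !coopArea_Ig. apply RInt_le; try lra; try apply ex_Ig; auto.
Qed.


Lemma msqrt c G0 : 0 < c -> c < G0 ->
  sqrt (c * G0) * sqrt (c * G0) = c * G0 /\ c < sqrt (c * G0) < G0.
Proof.
  intros hc hG.
  assert (E : sqrt (c * G0) * sqrt (c * G0) = c * G0) by (apply sqrt_sqrt; nra).
  assert (P : 0 <= sqrt (c * G0)) by apply sqrt_pos.
  split; [exact E|]. split; nra.
Qed.

Lemma partII c G0 t (hc : 0 < c) (hcG : c < G0) (ht : 0 < t) :
  maxAttainedAt c G0 t (closureInD c G0 t (regionII c G0 t)) (t / 2, sqrt (c * G0)).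
Proof.
  destruct (msqrt c G0 hc hcG) as [hm [hm1 hm2]].
  set (m := sqrt (c * G0)) in *.
  split.
  - split.
    + intros eps heps.
      assert (Hmm : 0 < (m - c) / (8 * m)) by (apply Rdiv_lt_0_compat; lra).
      destruct (pick4 (1/4) (eps / (2 * t)) ((m - c) / (8 * m)) (eps / (2 * m))) as [d [hd [hd1 [hd2 [hd3 hd4]]]]];
        try lra; try (apply Rdiv_lt_0_compat; lra).
      assert (hd2' : d * (2 * t) <= eps) by (apply (Rmult_le_compat_r (2*t)) in hd2; [|lra]; replace (eps / (2 * t) * (2 * t)) with eps in hd2 by (field; lra); exact hd2).
      assert (hd3' : d * (8 * m) <= m - c) by (apply (Rmult_le_compat_r (8*m)) in hd3; [|lra]; replace ((m - c) / (8 * m) * (8 * m)) with (m - c) in hd3 by (field; lra); exact hd3).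
      assert (hd4' : d * (2 * m) <= eps) by (apply (Rmult_le_compat_r (2*m)) in hd4; [|lra]; replace (eps / (2 * m) * (2 * m)) with eps in hd4 by (field; lra); exact hd4).
      exists ((1/2 - d) * t, m * (1 - d * d)).
      assert (Hs : sK t ((1/2 - d) * t) = 1/2 - d) by (unfold sK; field; lra).
      unfold regionII, inD. cbv zeta. simpl fst; simpl snd. rewrite Hs.
      assert (0 < m * d) by nra. assert (0 < m * d * d <= m * d / 4) by (split; [apply Rmult_lt_0_compat; lra| assert (0 <= m * d * (1/4 - d)) by (apply Rmult_le_pos; lra); lra]).
      fold m. repeat split. all: try nra. 1,2: (rewrite Rabs_left1; nra).
    + unfold inD; simpl; repeat split; lra.
  - intros [tau p] [Hcl HD]. unfold inD in HD; simpl in HD. simpl.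
    assert (H1 : 1 * tau + 0 * p <= t / 2).
    { apply (closure_lin _ (tau, p) 1 0 (t/2) Hcl). intros [x1 x2] Hx.
      unfold regionII, sK in Hx; cbv zeta in Hx; simpl in Hx.
      destruct Hx as [_ [_ [_ [_ Hx]]]].
      simpl. apply (Rmult_lt_compat_r t) in Hx; [|lra]. replace (x1 / t * t) with x1 in Hx by (field; lra). lra. }
    assert (H2 : 0 * tau + 1 * p <= m).
    { apply (closure_lin _ (tau, p) 0 1 m Hcl). intros [x1 x2] Hx.
      unfold regionII, sK in Hx; cbv zeta in Hx; simpl in Hx; fold m in Hx; simpl. lra. }
    apply compare; try lra.
    intros w Hw. apply pw_II; try lra.
    split. apply Rdiv_lt_0_compat; lra.
    apply (Rmult_le_reg_r t); [lra|]. replace (tau / t * t) with tau by (field; lra). lra.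
Qed.

Lemma partVII c G0 t (hc : 0 < c) (hcG : c < G0) (ht : 0 < t) :
  maxAttainedAt c G0 t (closureInD c G0 t (regionVII c G0 t))
    ((G0 - sqrt (c * G0)) / (G0 - c) * t, sqrt (c * G0)).
Proof.
  destruct (msqrt c G0 hc hcG) as [hm [hm1 hm2]].
  set (m := sqrt (c * G0)) in *.
  set (s7 := (G0 - m) / (G0 - c)).
  assert (Hs7 : s7 * (G0 - c) = G0 - m) by (unfold s7; field; lra).
  assert (Hs7b : 0 < s7 < 1) by (split; nra).
  split.
  - split.
    + intros eps heps.
      destruct (pick4 (eps / 2) (eps / (2 * t)) ((G0 - m) / 2) ((1 - s7) / 2)) as [d [hd [hd1 [hd2 [hd3 hd4]]]]];
        try lra; try (apply Rdiv_lt_0_compat; lra).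
      assert (hd2' : d * (2 * t) <= eps) by (apply (Rmult_le_compat_r (2*t)) in hd2; [|lra]; replace (eps / (2 * t) * (2 * t)) with eps in hd2 by (field; lra); exact hd2).
      exists ((s7 + d) * t, m + d).
      assert (Hs : sK t ((s7 + d) * t) = s7 + d) by (unfold sK; field; lra).
      unfold regionVII, inD. cbv zeta. simpl fst; simpl snd. rewrite Hs. fold m.
      assert (0 <= c * G0 * (2 * (s7 + d) - 1) ^ 2) by (apply Rmult_le_pos; [nra|apply pow2_ge_0]). repeat split. all: try nra.
      * rewrite Rabs_right; nra.
      * rewrite Rabs_right; nra.
    + unfold inD; simpl; repeat split; nra.
  - intros [tau p] [Hcl HD]. unfold inD in HD; simpl in HD. simpl.
    assert (H1 : 0 * tau + (-1) * p <= - m).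
    { apply (closure_lin _ (tau, p) 0 (-1) (-m) Hcl). intros [x1 x2] Hx.
      unfold regionVII, sK in Hx; cbv zeta in Hx; simpl in Hx; fold m in Hx; simpl. lra. }
    assert (H2 : (- ((G0 - c) / t)) * tau + (-1) * p <= - G0).
    { apply (closure_lin _ (tau, p) _ (-1) (-G0) Hcl). intros [x1 x2] Hx.
      unfold regionVII, sK in Hx; cbv zeta in Hx; simpl in Hx; simpl.
      replace (G0 * (1 - x1 / t) + c * (x1 / t)) with (G0 - (G0 - c) / t * x1) in Hx by (field; lra).
      lra. }
    apply compare; try lra. split; nra.
    assert (Hs01 : 0 < tau / t < 1).
    { split. apply Rdiv_lt_0_compat; lra.
      apply (Rmult_lt_reg_r t); [lra|]. replace (tau / t * t) with tau by (field; lra). lra. }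
    assert (HL : G0 * (1 - tau / t) + c * (tau / t) <= p).
    { replace (G0 * (1 - tau / t) + c * (tau / t)) with (G0 - (G0 - c) / t * tau) by (field; lra). lra. }
    intros w Hw. apply pw_VII; lra.
Qed.

Lemma pick5 a b c d e : 0 < a -> 0 < b -> 0 < c -> 0 < d -> 0 < e ->
  exists x, 0 < x /\ x <= a /\ x <= b /\ x <= c /\ x <= d /\ x <= e.
Proof.
  intros. exists (Rmin a (Rmin b (Rmin c (Rmin d e)))).
  repeat split; unfold Rmin; repeat destruct Rle_dec; lra.
Qed.

Lemma partIII c G0 t (hc : 0 < c) (hcG : c < G0) (ht : 0 < t) :
  maxAttainedAt c G0 t (closureInD c G0 t (regionIII c G0 t))
    (G0 / (G0 + c) * t, 2 * G0 * c / (G0 + c)).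
Proof.
  destruct (msqrt c G0 hc hcG) as [hm [hm1 hm2]].
  set (m := sqrt (c * G0)) in *.
  set (ss := G0 / (G0 + c)).
  set (ps := 2 * G0 * c / (G0 + c)).
  assert (Hss : (G0 + c) * ss = G0) by (unfold ss; field; lra).
  assert (Hps : ps = 2 * c * ss) by (unfold ps, ss; field; lra).
  assert (Hss01 : 1/2 < ss < 1) by (split; nra).
  assert (HpsL : ps = G0 - (G0 - c) * ss) by nra.
  assert (Hpsc : c < ps) by nra.
  assert (Hpsm : ps <= m).
  { assert (ps * ps <= m * m).
    { rewrite hm, Hps. assert (0 <= (G0 - c) ^ 2) by apply pow2_ge_0.
      assert (B : 4 * c * G0 <= (G0 + c) ^ 2) by nra.
      assert (A : 4 * c * ss * ss <= G0).
      { apply (Rmult_le_reg_r ((G0 + c) ^ 2)); [nra|].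
        replace (4 * c * ss * ss * (G0 + c) ^ 2) with (4 * c * ((G0 + c) * ss) ^ 2) by ring.
        rewrite Hss. nra. }
      nra. }
    nra. }
  split.
  - split.
    + intros eps heps.
      set (q := (G0 + c) ^ 2 / (2 * G0)).
      assert (Hq : 0 < q) by (unfold q; apply Rdiv_lt_0_compat; nra).
      assert (Hq2 : q * (2 * G0) = (G0 + c) ^ 2) by (unfold q; field; lra).
      set (C := (G0 - c) + q).
      assert (HC : 0 < C) by (unfold C; lra).
      destruct (pick5 1 ((1 - ss) / 2) (eps / (2 * C)) ((ps - c) / (2 * C)) (eps / (2 * t)))
        as [d [hd [hd1 [hd2 [hd3 [hd4 hd5]]]]]]; try lra; try (apply Rdiv_lt_0_compat; lra).
      assert (hd3' : d * (2 * C) <= eps) by (apply (Rmult_le_compat_r (2*C)) in hd3; [|lra]; replace (eps / (2 * C) * (2 * C)) with eps in hd3 by (field; lra); exact hd3).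
      assert (hd4' : d * (2 * C) <= ps - c) by (apply (Rmult_le_compat_r (2*C)) in hd4; [|lra]; replace ((ps - c) / (2 * C) * (2 * C)) with (ps - c) in hd4 by (field; lra); exact hd4).
      assert (hd5' : d * (2 * t) <= eps) by (apply (Rmult_le_compat_r (2*t)) in hd5; [|lra]; replace (eps / (2 * t) * (2 * t)) with eps in hd5 by (field; lra); exact hd5).
      set (p := ps - (G0 - c) * d - q * d * d).
      exists ((ss + d) * t, p).
      assert (Hs : sK t ((ss + d) * t) = ss + d) by (unfold sK; field; lra).
      assert (Hdd : d * d <= d) by (assert (0 <= d * (1 - d)) by (apply Rmult_le_pos; lra); lra).
      assert (Hqd : 0 < q * d * d) by (apply Rmult_lt_0_compat; [apply Rmult_lt_0_compat|]; lra).
      assert (Hqd2 : q * d * d <= q * d) by (rewrite Rmult_assoc; apply Rmult_le_compat_l; lra).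
      assert (Hp1 : ps - C * d <= p < ps - (G0 - c) * d) by (unfold p, C; split; lra).
      assert (HL : G0 * (1 - (ss + d)) + c * (ss + d) = ps - (G0 - c) * d) by nra.
      assert (Hsq : p ^ 2 >= 4 * c * G0 * (ss + d) * (1 - (ss + d))).
      {
        assert (E : (ps - (G0 - c) * d) ^ 2 - 4 * c * G0 * (ss + d) * (1 - (ss + d)) = ((G0 + c) * d) ^ 2).
        { unfold ps, ss. field. lra. }
        assert (Ep : p = (ps - (G0 - c) * d) - ((G0 + c) * d) ^ 2 / (2 * G0)) by (unfold p, q; field; lra).
        set (L := ps - (G0 - c) * d) in *.
        set (X := ((G0 + c) * d) ^ 2 / (2 * G0)) in *.
        assert (HX : 0 <= X) by (unfold X; apply Rmult_le_pos; [apply pow2_ge_0|apply Rlt_le, Rinv_0_lt_compat; lra]).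
        assert (HX2 : 2 * G0 * X = ((G0 + c) * d) ^ 2) by (unfold X; field; lra).
        assert (HLX : L * X <= G0 * X) by (apply Rmult_le_compat_r; [lra|unfold L; nra]).
        rewrite Ep. assert (0 <= X * X) by nra. nra. }
      unfold regionIII, inD. cbv zeta. simpl fst; simpl snd. rewrite Hs. fold m. fold ss.
      repeat split. all: try nra.
      * rewrite Rabs_right; nra.
      * rewrite Rabs_left1; nra.
    + unfold inD; simpl. repeat split; nra.
  - intros [tau p] [Hcl HD]. unfold inD in HD; simpl in HD. simpl.
    assert (H1 : (-1) * tau + 0 * p <= - (ss * t)).
    { apply (closure_lin _ (tau, p) (-1) 0 _ Hcl). intros [x1 x2] Hx.
      unfold regionIII, sK in Hx; cbv zeta in Hx; simpl in Hx; fold ss in Hx; simpl.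
      destruct Hx as [_ [_ [_ [_ Hx]]]].
      apply (Rmult_lt_compat_r t) in Hx; [|lra]. replace (x1 / t * t) with x1 in Hx by (field; lra). lra. }
    assert (H2 : ((G0 - c) / t) * tau + 1 * p <= G0).
    { apply (closure_lin _ (tau, p) _ 1 G0 Hcl). intros [x1 x2] Hx.
      unfold regionIII, sK in Hx; cbv zeta in Hx; simpl in Hx; simpl.
      replace (G0 * (1 - x1 / t) + c * (x1 / t)) with (G0 - (G0 - c) / t * x1) in Hx by (field; lra).
      lra. }
    assert (Hs01 : ss <= tau / t < 1).
    { split; apply (Rmult_le_reg_r t) || apply (Rmult_lt_reg_r t); try lra;
      replace (tau / t * t) with tau by (field; lra); lra. }
    assert (HL : p <= G0 * (1 - tau / t) + c * (tau / t)).
    { replace (G0 * (1 - tau / t) + c * (tau / t)) with (G0 - (G0 - c) / t * tau) by (field; lra). lra. }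
    apply compare; [lra|lra|lra|lra|split; nra|lra|].
    intros w Hw. apply pw_III. all: try lra. fold ss; lra.
Qed.

Theorem proposition2 (c G0 t : R) (hc : 0 < c) (hcG : c < G0) (ht : 0 < t) :
  maxAttainedAt c G0 t (closureInD c G0 t (regionII c G0 t))
    (t / 2, sqrt (c * G0)) /\
  maxAttainedAt c G0 t (closureInD c G0 t (regionIII c G0 t))
    (G0 / (G0 + c) * t, 2 * G0 * c / (G0 + c)) /\
  maxAttainedAt c G0 t (closureInD c G0 t (regionVII c G0 t))
    ((G0 - sqrt (c * G0)) / (G0 - c) * t, sqrt (c * G0)).
Proof.
  split; [apply partII; assumption|].
  split; [apply partIII; assumption|apply partVII; assumption].
Qed.
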